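(* Let $X$ be a real Banach space, $\varepsilon>0$, and $A\subseteq B_X$ nonempty, separable and non-$\varepsilon$-dentable; let $C=\overline{\operatorname{co}}(A)$. Fix $\delta<\varepsilon/2$, let $(B_i)_{i\ge0}$ be a sequence of subsets of $C$, each relatively open in $C$ (norm topology) with $\operatorname{diam}(B_i)<\varepsilon$, such that $C=\bigcup_{i\ge0}B_i$ (such a sequence exists), and let $(\delta_n)_{n\ge0}$ be a sequence in $(0,1)$. Then there exist a finitely branching tree $\mathbb T\subseteq\mathbb N^{<\omega}$ in which every node has at least one child, points $(x_b)_{b\in\mathbb T}\subseteq A$, and slices $(S_b)_{b\in\mathbb T}$ of $C$ (each with a fixed defining pair) such that for every $n\ge0$: (1) for all $b\in\mathbb T_n$, $x_b\in S_b^{\delta_n}\cap A\subseteq S_b$; (2) if $n\ge1$, then for all $b\in\mathbb T_n$, $S_b\cap B_{n-1}=\emptyset$ and $S_b\cap\bigcup_{|p|\le n-1}B_\delta(x_p)=\emptyset$; (3) if $n\ge1$, then for all $b\in\mathbb T_{n-1}$ with children $(b,1),\dots,(b,q)$, we have $S_{(b,i)}\subseteq S_b$ for each $i$ and $x_b\in\operatorname{co}(x_{(b,1)},\dots,x_{(b,q)})+B_{2\delta_{n-1}}(0)$. In particular $(x_b)_{b\in\mathbb T}$ is a $(2\delta_n)_{n\ge0}$-approximate bush.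
   Context: $B_X$ is the closed unit ball of $X$, $B_r(x)$ the open ball of radius $r$ about $x$; $\operatorname{co}$, $\overline{\operatorname{co}}$ denote convex hull and norm-closed convex hull. For bounded nonempty $E\subseteq X$, $f$ in the closed unit ball of $X^*$ and $\delta>0$, the slice $S(f,E,\delta)=\{e\in E: f(e)>\sup f(E)-\delta\}$. A bounded set is non-$\varepsilon$-dentable if every slice has diameter $>\varepsilon$. For $\gamma\in(0,1)$ and a slice $S=S(f,C,\delta)$, its $\gamma$-shallow parallel is $S^\gamma=S(f,C,\gamma\delta/2)$. $\mathbb N^{<\omega}$ is the set of finite sequences of naturals; a tree is a nonempty $\mathbb T\subseteq\mathbb N^{<\omega}$ closed under removing the last entry; $(b,i)$ is a child of $b$; finitely branching means each node has finitely many children, and a node with $k$ children has children $(b,1),\dots,(b,k)$. $|b|$ is the length of $b$, $\mathbb T_n=\{b\in\mathbb T:|b|=n\}$. A family $(x_b)_{b\in\mathbb T}$ is a $(\delta_n)_{n\ge0}$-approximate bush if for each $n$ and $b\in\mathbb T_n$ with children $(b,1),\dots,(b,k)$, $x_b\in\operatorname{co}(x_{(b,1)},\dots,x_{(b,k)})+B_{\delta_n}(0)$. *)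

(* Defs.v *)
From Stdlib Require Import Reals Lra List.
Open Scope R_scope.
Import ListNotations.

Record NormedSpace := {
  carrier :> Type;
  vzero : carrier;
  vadd : carrier -> carrier -> carrier;
  vopp : carrier -> carrier;
  vscal : R -> carrier -> carrier;
  vnorm : carrier -> R;
  vadd_assoc : forall x y z, vadd x (vadd y z) = vadd (vadd x y) z;
  vadd_comm : forall x y, vadd x y = vadd y x;
  vadd_zero : forall x, vadd x vzero = x;
  vadd_opp : forall x, vadd x (vopp x) = vzero;
  vscal_one : forall x, vscal 1 x = x;
  vscal_assoc : forall a b x, vscal a (vscal b x) = vscal (a * b) x;
  vscal_distr_v : forall a x y, vscal a (vadd x y) = vadd (vscal a x) (vscal a y);
  vscal_distr_s : forall a b x, vscal (a + b) x = vadd (vscal a x) (vscal b x);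
  vnorm_zero : forall x, vnorm x = 0 -> x = vzero;
  vnorm_scal : forall a x, vnorm (vscal a x) = Rabs a * vnorm x;
  vnorm_triangle : forall x y, vnorm (vadd x y) <= vnorm x + vnorm y
}.

Arguments vzero {_}.
Arguments vadd {_} _ _.
Arguments vopp {_} _.
Arguments vscal {_} _ _.
Arguments vnorm {_} _.

Definition vsub {X : NormedSpace} (x y : X) : X := vadd x (vopp y).
Definition ndist {X : NormedSpace} (x y : X) : R := vnorm (vsub x y).

Definition Banach (X : NormedSpace) : Prop :=
  forall u : nat -> X,
    (forall e, 0 < e -> exists N, forall m n, (N <= m)%nat -> (N <= n)%nat -> ndist (u m) (u n) < e) ->
    exists l : X, forall e, 0 < e -> exists N, forall n, (N <= n)%nat -> ndist (u n) l < e.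

Definition InUnitBall {X : NormedSpace} (x : X) : Prop := vnorm x <= 1.

Definition DualBall {X : NormedSpace} (f : X -> R) : Prop :=
  (forall x y, f (vadd x y) = f x + f y) /\
  (forall a x, f (vscal a x) = a * f x) /\
  (forall x, Rabs (f x) <= vnorm x).

Definition SeparableSet {X : NormedSpace} (A : X -> Prop) : Prop :=
  exists s : nat -> X, (forall n, A (s n)) /\
    forall x, A x -> forall e, 0 < e -> exists n, ndist x (s n) < e.

Fixpoint vsum {X : NormedSpace} (f : nat -> X) (n : nat) : X :=
  match n with O => vzero | S m => vadd (vsum f m) (f m) end.
Fixpoint rsum (f : nat -> R) (n : nat) : R :=
  match n with O => 0 | S m => rsum f m + f m end.

Definition Co {X : NormedSpace} (E : X -> Prop) (x : X) : Prop :=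
  exists (n : nat) (p : nat -> X) (w : nat -> R),
    (forall i, (i < n)%nat -> E (p i) /\ 0 <= w i) /\
    rsum w n = 1 /\
    x = vsum (fun i => vscal (w i) (p i)) n.

Definition ClCo {X : NormedSpace} (E : X -> Prop) (x : X) : Prop :=
  forall e, 0 < e -> exists y, Co E y /\ ndist x y < e.

Definition CoFin {X : NormedSpace} (p : nat -> X) (q : nat) (z : X) : Prop :=
  Co (fun y => exists i, (1 <= i <= q)%nat /\ y = p i) z.

Definition InCoPlusBall {X : NormedSpace} (y : X) (p : nat -> X) (q : nat) (r : R) : Prop :=
  exists z, CoFin p q z /\ vnorm (vsub y z) < r.

Definition Slice {X : NormedSpace} (f : X -> R) (E : X -> Prop) (delta : R) (e : X) : Prop :=
  E e /\ exists s, is_lub (fun r => exists y, E y /\ r = f y) s /\ f e > s - delta.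

Definition NonDentable {X : NormedSpace} (eps : R) (E : X -> Prop) : Prop :=
  forall f delta, DualBall f -> 0 < delta ->
    exists x y, Slice f E delta x /\ Slice f E delta y /\ ndist x y > eps.

Definition DiamLt {X : NormedSpace} (B : X -> Prop) (eps : R) : Prop :=
  exists r, r < eps /\ forall x y, B x -> B y -> ndist x y <= r.

Definition RelOpen {X : NormedSpace} (B C : X -> Prop) : Prop :=
  (forall x, B x -> C x) /\
  forall x, B x -> exists r, 0 < r /\ forall y, C y -> ndist y x < r -> B y.

(** Trees: T ⊆ N^<omega given as a predicate on lists; the children of b
    are b ++ [i]. [k b] is the number of children of b. *)
Definition FinBranchTree (T : list nat -> Prop) (k : list nat -> nat) : Prop :=
  T [] /\
  (forall b i, T (b ++ [i]) -> T b) /\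
  (forall b i, T b -> (T (b ++ [i]) <-> (1 <= i <= k b)%nat)).

Definition ApproxBush {X : NormedSpace} (T : list nat -> Prop) (k : list nat -> nat)
  (x : list nat -> X) (dl : nat -> R) : Prop :=
  forall n b, T b -> length b = n ->
    InCoPlusBall (x b) (fun i => x (b ++ [i])) (k b) (dl n).

(* Main.v *)
Require Import Defs.
From Stdlib Require Import Reals Lra List Lia Classical ClassicalEpsilon FunctionalExtensionality.
Open Scope R_scope.
Import ListNotations.

Arguments vadd_assoc {_} _ _ _.
Arguments vadd_comm {_} _ _.
Arguments vadd_zero {_} _.
Arguments vadd_opp {_} _.
Arguments vscal_one {_} _.
Arguments vscal_assoc {_} _ _ _.
Arguments vscal_distr_v {_} _ _ _.
Arguments vscal_distr_s {_} _ _ _.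
Arguments vnorm_zero {_} _ _.
Arguments vnorm_scal {_} _ _.
Arguments vnorm_triangle {_} _ _.

Lemma vadd_0l {X : NormedSpace} (x : X) : vadd vzero x = x.
Proof. rewrite vadd_comm; apply vadd_zero. Qed.

Lemma vadd_cancel_l {X : NormedSpace} (x y z : X) : vadd x y = vadd x z -> y = z.
Proof.
  intro H. assert (H2: vadd (vopp x) (vadd x y) = vadd (vopp x) (vadd x z)) by (rewrite H; auto).
  rewrite !vadd_assoc in H2. rewrite (vadd_comm (vopp x) x), vadd_opp, !vadd_0l in H2. exact H2.
Qed.

Lemma vscal_0s {X : NormedSpace} (x : X) : vscal 0 x = vzero.
Proof.
  apply (vadd_cancel_l (vscal 0 x)). rewrite vadd_zero, <- vscal_distr_s. f_equal; ring.
Qed.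

Lemma vscal_0v {X : NormedSpace} (a : R) : vscal a (@vzero X) = vzero.
Proof.
  rewrite <- (vscal_0s (@vzero X)), vscal_assoc. rewrite Rmult_0_r. reflexivity.
Qed.

Lemma vopp_scal {X : NormedSpace} (x : X) : vopp x = vscal (-1) x.
Proof.
  apply (vadd_cancel_l x). rewrite vadd_opp.
  rewrite <- (vscal_one x) at 1. rewrite <- vscal_distr_s.
  replace (1 + -1) with 0 by ring. now rewrite vscal_0s.
Qed.

Lemma vnorm_vzero {X : NormedSpace} : vnorm (@vzero X) = 0.
Proof. rewrite <- (vscal_0s (@vzero X)), vnorm_scal, Rabs_R0; ring. Qed.

Lemma vnorm_opp {X : NormedSpace} (x : X) : vnorm (vopp x) = vnorm x.
Proof. rewrite vopp_scal, vnorm_scal. replace (Rabs (-1)) with 1 by (rewrite Rabs_left; lra). ring. Qed.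

Lemma vnorm_nonneg {X : NormedSpace} (x : X) : 0 <= vnorm x.
Proof.
  pose proof (vnorm_triangle x (vopp x)). rewrite vadd_opp, vnorm_vzero, vnorm_opp in H. lra.
Qed.

Lemma vopp_vadd {X : NormedSpace} (x y : X) : vopp (vadd x y) = vadd (vopp x) (vopp y).
Proof. rewrite !vopp_scal; apply vscal_distr_v. Qed.

Lemma vopp_vopp {X : NormedSpace} (x : X) : vopp (vopp x) = x.
Proof. rewrite !vopp_scal, vscal_assoc. replace (-1 * -1) with 1 by ring. apply vscal_one. Qed.

Lemma vadd_swap4 {X : NormedSpace} (a b c d : X) : vadd (vadd a b) (vadd c d) = vadd (vadd a c) (vadd b d).
Proof.
  rewrite <- !vadd_assoc. f_equal. rewrite !vadd_assoc. f_equal. apply vadd_comm.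
Qed.

Lemma vsub_diag {X : NormedSpace} (x : X) : vsub x x = vzero.
Proof. apply vadd_opp. Qed.

Lemma ndist_sym {X : NormedSpace} (x y : X) : ndist x y = ndist y x.
Proof.
  unfold ndist, vsub. rewrite <- vnorm_opp, vopp_vadd, vopp_vopp, vadd_comm. reflexivity.
Qed.

Lemma vsub_add_sub {X : NormedSpace} (x y z : X) : vadd (vsub x y) (vsub y z) = vsub x z.
Proof.
  unfold vsub. rewrite <- vadd_assoc. f_equal. rewrite vadd_assoc, (vadd_comm (vopp y) y), vadd_opp, vadd_0l. auto.
Qed.

Lemma ndist_tri {X : NormedSpace} (x y z : X) : ndist x z <= ndist x y + ndist y z.
Proof. unfold ndist. rewrite <- (vsub_add_sub x y z). apply vnorm_triangle. Qed.

Lemma ndist_nonneg {X : NormedSpace} (x y : X) : 0 <= ndist x y.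
Proof. apply vnorm_nonneg. Qed.

Lemma ndist_self {X : NormedSpace} (x : X) : ndist x x = 0.
Proof. unfold ndist; rewrite vsub_diag; apply vnorm_vzero. Qed.

Lemma vscal_sub {X : NormedSpace} (a : R) (x y : X) : vscal a (vsub x y) = vsub (vscal a x) (vscal a y).
Proof. unfold vsub. rewrite vscal_distr_v, !vopp_scal, !vscal_assoc. f_equal. f_equal. ring. Qed.

Lemma vsub_vadd {X : NormedSpace} (a b c d : X) : vsub (vadd a b) (vadd c d) = vadd (vsub a c) (vsub b d).
Proof. unfold vsub. rewrite vopp_vadd. apply vadd_swap4. Qed.

Lemma vscal_distr_sub {X : NormedSpace} (a b : R) (x : X) : vscal (a - b) x = vsub (vscal a x) (vscal b x).
Proof. unfold vsub, Rminus. rewrite vscal_distr_s, vopp_scal, vscal_assoc. f_equal. f_equal. ring. Qed.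

Lemma ndist_scal {X : NormedSpace} (a : R) (x y : X) : ndist (vscal a x) (vscal a y) = Rabs a * ndist x y.
Proof. unfold ndist. rewrite <- vscal_sub. apply vnorm_scal. Qed.

Lemma vadd_sub_l {X : NormedSpace} (x y : X) : vsub (vadd x y) x = y.
Proof. unfold vsub. rewrite (vadd_comm x y), <- vadd_assoc, vadd_opp, vadd_zero. auto. Qed.

Lemma vsub_add {X : NormedSpace} (x y : X) : vadd (vsub x y) y = x.
Proof. unfold vsub. rewrite <- vadd_assoc, (vadd_comm (vopp y) y), vadd_opp, vadd_zero. auto. Qed.

Lemma vsub_0r {X : NormedSpace} (x : X) : vsub x vzero = x.
Proof. unfold vsub. rewrite vopp_scal, vscal_0v, vadd_zero. auto. Qed.

Lemma vsub_eq0 {X : NormedSpace} (x y : X) : vsub x y = vzero -> x = y.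
Proof. intro H. rewrite <- (vsub_add x y), H, vadd_0l. auto. Qed.

Lemma dual_zero {X : NormedSpace} (f : X -> R) : DualBall f -> f vzero = 0.
Proof. intros [_ [Hs _]]. rewrite <- (vscal_0s (@vzero X)), Hs. ring. Qed.

Lemma dual_opp {X : NormedSpace} (f : X -> R) x : DualBall f -> f (vopp x) = - f x.
Proof. intros Hf. destruct Hf as [_ [Hs _]]. rewrite vopp_scal, Hs. ring. Qed.

Lemma dual_sub {X : NormedSpace} (f : X -> R) x y : DualBall f -> f (vsub x y) = f x - f y.
Proof. intros Hf. unfold vsub. pose proof Hf as [Ha _]. rewrite Ha, dual_opp by auto. ring. Qed.

Lemma dual_add {X : NormedSpace} (f : X -> R) x y : DualBall f -> f (vadd x y) = f x + f y.
Proof. intros [Ha _]. apply Ha. Qed.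

Lemma dual_scal {X : NormedSpace} (f : X -> R) a x : DualBall f -> f (vscal a x) = a * f x.
Proof. intros [_ [Hs _]]. apply Hs. Qed.

Lemma dual_bound {X : NormedSpace} (f : X -> R) x : DualBall f -> Rabs (f x) <= vnorm x.
Proof. intros [_ [_ H]]. apply H. Qed.

Lemma dual_lip {X : NormedSpace} (f : X -> R) x y : DualBall f -> f x <= f y + ndist x y.
Proof.
  intros Hf. pose proof (dual_bound f (vsub x y) Hf). rewrite dual_sub in H by auto.
  unfold ndist. apply Rabs_le_between' in H || idtac.
  pose proof (Rle_abs (f x - f y)). lra.
Qed.
Lemma vsum_ext {X : NormedSpace} (F G : nat -> X) n : (forall i, (i < n)%nat -> F i = G i) -> vsum F n = vsum G n.
Proof. induction n; simpl; intros H; auto. rewrite IHn by (intros; apply H; lia). rewrite H by lia. auto. Qed.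

Lemma rsum_ext (F G : nat -> R) n : (forall i, (i < n)%nat -> F i = G i) -> rsum F n = rsum G n.
Proof. induction n; simpl; intros H; auto. rewrite IHn by (intros; apply H; lia). rewrite H by lia. auto. Qed.

Lemma rsum_le (F G : nat -> R) n : (forall i, (i < n)%nat -> F i <= G i) -> rsum F n <= rsum G n.
Proof. induction n; simpl; intros H. lra. pose proof (H n ltac:(lia)). pose proof (IHn ltac:(intros; apply H; lia)). lra. Qed.

Lemma rsum_nonneg (F : nat -> R) n : (forall i, (i < n)%nat -> 0 <= F i) -> 0 <= rsum F n.
Proof. intros H. replace 0 with (rsum (fun _ => 0) n). apply rsum_le; auto. induction n; simpl; auto. rewrite IHn; try ring. intros; apply H; lia. Qed.

Lemma rsum_scal (F : nat -> R) c n : rsum (fun i => c * F i) n = c * rsum F n.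
Proof. induction n; simpl. ring. rewrite IHn. ring. Qed.

Lemma rsum_plus (F G : nat -> R) n : rsum (fun i => F i + G i) n = rsum F n + rsum G n.
Proof. induction n; simpl. ring. rewrite IHn. ring. Qed.

Lemma rsum_app (F : nat -> R) n m : rsum F (n + m) = rsum F n + rsum (fun i => F (n + i)%nat) m.
Proof. induction m; simpl. rewrite Nat.add_0_r. ring. rewrite Nat.add_succ_r. simpl. rewrite IHm. ring. Qed.

Lemma vsum_app {X : NormedSpace} (F : nat -> X) n m : vsum F (n + m) = vadd (vsum F n) (vsum (fun i => F (n + i)%nat) m).
Proof. induction m; simpl. rewrite Nat.add_0_r, vadd_zero. auto. rewrite Nat.add_succ_r. simpl. rewrite IHm, vadd_assoc. auto. Qed.

Lemma vscal_vsum {X : NormedSpace} a (F : nat -> X) n : vscal a (vsum F n) = vsum (fun i => vscal a (F i)) n.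
Proof. induction n; simpl. apply vscal_0v. rewrite vscal_distr_v, IHn. auto. Qed.

Lemma dual_vsum {X : NormedSpace} (f : X -> R) (w : nat -> R) (p : nat -> X) n : DualBall f ->
  f (vsum (fun i => vscal (w i) (p i)) n) = rsum (fun i => w i * f (p i)) n.
Proof. intros Hf. induction n; simpl. apply dual_zero; auto. rewrite dual_add, dual_scal, IHn by auto. auto. Qed.

Lemma vnorm_vsum {X : NormedSpace} (F : nat -> X) n : vnorm (vsum F n) <= rsum (fun i => vnorm (F i)) n.
Proof. induction n; simpl. rewrite vnorm_vzero; lra. pose proof (vnorm_triangle (vsum F n) (F n)). lra. Qed.

Lemma vsum_sub {X : NormedSpace} (w : nat -> R) (p : nat -> X) y n :
  vsum (fun i => vscal (w i) (vsub (p i) y)) n = vsub (vsum (fun i => vscal (w i) (p i)) n) (vscal (rsum w n) y).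
Proof.
  induction n; simpl. rewrite vscal_0s, vsub_0r. auto.
  rewrite IHn, vscal_distr_s, vsub_vadd, vscal_sub. auto.
Qed.

Lemma vnorm_convex_comb {X : NormedSpace} (w : nat -> R) (p : nat -> X) n :
  (forall i, (i < n)%nat -> 0 <= w i) ->
  vnorm (vsum (fun i => vscal (w i) (p i)) n) <= rsum (fun i => w i * vnorm (p i)) n.
Proof.
  intros Hw. eapply Rle_trans. apply vnorm_vsum. apply Req_le. apply rsum_ext. intros i Hi.
  rewrite vnorm_scal, Rabs_right by (apply Rle_ge, Hw; auto). auto.
Qed.

Lemma ndist_comb {X : NormedSpace} (w : nat -> R) (p : nat -> X) y n :
  (forall i, (i < n)%nat -> 0 <= w i) -> rsum w n = 1 ->
  ndist (vsum (fun i => vscal (w i) (p i)) n) y <= rsum (fun i => w i * ndist (p i) y) n.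
Proof.
  intros Hw Hs. unfold ndist. rewrite <- (vscal_one y) at 1. rewrite <- Hs, <- vsum_sub.
  apply vnorm_convex_comb; auto.
Qed.

Lemma Co_single {X : NormedSpace} (E : X -> Prop) x : E x -> Co E x.
Proof.
  intros H. exists 1%nat, (fun _ => x), (fun _ => 1). split; [|split].
  intros i Hi; split; auto; lra. simpl; ring. simpl. rewrite vadd_0l, vscal_one. auto.
Qed.

Lemma Co_mono {X : NormedSpace} (E F : X -> Prop) z : (forall x, E x -> F x) -> Co E z -> Co F z.
Proof.
  intros H [n [p [w [H1 [H2 H3]]]]]. exists n, p, w. split; auto. intros i Hi; destruct (H1 i Hi); auto.
Qed.

Lemma Co_convex {X : NormedSpace} (E : X -> Prop) x y t : Co E x -> Co E y -> 0 <= t <= 1 ->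
  Co E (vadd (vscal t x) (vscal (1 - t) y)).
Proof.
  intros [n [p [w [H1 [H2 H3]]]]] [m [q [v [K1 [K2 K3]]]]] Ht.
  exists (n + m)%nat, (fun i => if Nat.ltb i n then p i else q (i - n)%nat),
    (fun i => if Nat.ltb i n then t * w i else (1 - t) * v (i - n)%nat).
  split; [|split].
  - intros i Hi. destruct (Nat.ltb i n) eqn:E1.
    + apply Nat.ltb_lt in E1. destruct (H1 i E1). split; auto. apply Rmult_le_pos; lra.
    + apply Nat.ltb_ge in E1. destruct (K1 (i - n)%nat ltac:(lia)). split; auto. apply Rmult_le_pos; lra.
  - rewrite rsum_app. rewrite (rsum_ext _ (fun i => t * w i) n).
    rewrite (rsum_ext _ (fun i => (1 - t) * v i) m). rewrite !rsum_scal, H2, K2. ring.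
    intros i Hi. replace (Nat.ltb (n + i) n) with false. f_equal. f_equal. lia.
    symmetry; apply Nat.ltb_ge; lia.
    intros i Hi. replace (Nat.ltb i n) with true; auto. symmetry; apply Nat.ltb_lt; auto.
  - rewrite vsum_app, H3, K3, !vscal_vsum. f_equal.
    apply vsum_ext. intros i Hi. replace (Nat.ltb i n) with true by (symmetry; apply Nat.ltb_lt; auto).
    rewrite vscal_assoc. auto.
    apply vsum_ext. intros i Hi. replace (Nat.ltb (n + i) n) with false by (symmetry; apply Nat.ltb_ge; lia).
    rewrite vscal_assoc. replace (n + i - n)%nat with i by lia. auto.
Qed.

Lemma ClCo_incl {X : NormedSpace} (E : X -> Prop) x : E x -> ClCo E x.
Proof. intros H e He. exists x. split. apply Co_single; auto. rewrite ndist_self; auto. Qed.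

Lemma ClCo_mono {X : NormedSpace} (E F : X -> Prop) z : (forall x, E x -> F x) -> ClCo E z -> ClCo F z.
Proof. intros H Hz e He. destruct (Hz e He) as [y [Hy Hd]]. exists y; split; auto. eapply Co_mono; eauto. Qed.

Lemma Co_halfspace {X : NormedSpace} (E : X -> Prop) (k : X -> R) a z : DualBall k ->
  (forall x, E x -> k x <= a) -> Co E z -> k z <= a.
Proof.
  intros Hk H [n [p [w [H1 [H2 H3]]]]]. subst z. rewrite dual_vsum by auto.
  replace a with (rsum (fun i => w i * a) n) by (rewrite (rsum_ext _ (fun i => a * w i)) by (intros; ring); rewrite rsum_scal, H2; ring).
  apply rsum_le. intros i Hi. destruct (H1 i Hi). apply Rmult_le_compat_l; auto.
Qed.

Lemma ClCo_halfspace {X : NormedSpace} (E : X -> Prop) (k : X -> R) a z : DualBall k ->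
  (forall x, E x -> k x <= a) -> ClCo E z -> k z <= a.
Proof.
  intros Hk H Hz. apply Rnot_lt_le. intro Hlt.
  destruct (Hz (k z - a) ltac:(lra)) as [y [Hy Hd]].
  pose proof (Co_halfspace E k a y Hk H Hy). pose proof (dual_lip k z y Hk). lra.
Qed.

Lemma Co_ball {X : NormedSpace} (E : X -> Prop) z :
  (forall x, E x -> vnorm x <= 1) -> Co E z -> vnorm z <= 1.
Proof.
  intros H [n [p [w [H1 [H2 H3]]]]]. subst z. eapply Rle_trans. apply vnorm_convex_comb.
  intros; apply H1; auto. rewrite <- H2. apply rsum_le. intros i Hi. destruct (H1 i Hi).
  pose proof (H _ H0). rewrite <- (Rmult_1_r (w i)) at 2. apply Rmult_le_compat_l; auto.
Qed.

Lemma ClCo_ball {X : NormedSpace} (E : X -> Prop) z :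
  (forall x, E x -> vnorm x <= 1) -> ClCo E z -> vnorm z <= 1.
Proof.
  intros H Hz. apply Rnot_lt_le. intro Hlt.
  destruct (Hz (vnorm z - 1) ltac:(lra)) as [y [Hy Hd]].
  pose proof (Co_ball E y H Hy). unfold ndist in Hd.
  pose proof (vnorm_triangle (vsub z y) y). rewrite vsub_add in H1. lra.
Qed.
From mathcomp Require classical_sets.

Lemma vopp_unique {X : NormedSpace} (u v : X) : vadd u v = vzero -> u = vopp v.
Proof. intros H. apply (vadd_cancel_l v). rewrite vadd_opp, vadd_comm. auto. Qed.

Lemma vsub_swap {X : NormedSpace} (a b : X) : vopp (vsub a b) = vsub b a.
Proof. unfold vsub. rewrite vopp_vadd, vopp_vopp, vadd_comm. auto. Qed.

Lemma lin_eq_sub {X : NormedSpace} (m m' z : X) t t' :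
  vadd m (vscal t z) = vadd m' (vscal t' z) -> vsub m m' = vscal (t' - t) z.
Proof.
  intros H. assert (H2 : vsub (vadd m (vscal t z)) (vadd m' (vscal t' z)) = vzero) by (rewrite H; apply vsub_diag).
  rewrite vsub_vadd in H2. apply vopp_unique in H2. rewrite H2, vsub_swap, vscal_distr_sub. auto.
Qed.

Lemma vscal_comb {X : NormedSpace} (m z : X) t s :
  vscal s (vadd m (vscal t z)) = vadd (vscal s m) (vscal (s * t) z).
Proof. rewrite vscal_distr_v, vscal_assoc. auto. Qed.

Definition PG {X : NormedSpace} (Dom : X -> R -> Prop) (G : X * R -> Prop) : Prop :=
  (forall x a b, G (x, a) -> G (x, b) -> a = b) /\
  (forall x y a b, G (x, a) -> G (y, b) -> G (vadd x y, a + b)) /\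
  (forall s x a, G (x, a) -> G (vscal s x, s * a)) /\
  (forall x a q, G (x, a) -> Dom x q -> a <= q).

Lemma HB_step {X : NormedSpace} (Dom : X -> R -> Prop)
  (Hb : forall x q s, Dom x q -> 0 < s -> Dom (vscal s x) (s * q))
  (Hc : forall x y q1 q2, Dom x q1 -> Dom y q2 -> Dom (vadd x y) (q1 + q2))
  (Ha : forall x, Dom x (vnorm x))
  (A : X * R -> Prop) (HA : PG Dom A) (H0 : A (vzero, 0)) (z : X) (Hz : forall a, ~ A (z, a)) :
  exists B, PG Dom B /\ (forall p, A p -> B p) /\ ~ (forall p, B p -> A p).
Proof.
  destruct HA as [Hf [Had [Hsc Hdom]]].
  assert (Key : forall m a q m' a' q', A (m, a) -> Dom (vsub m z) q -> A (m', a') -> Dom (vadd m' z) q' -> a - q <= q' - a').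
  { intros m a q m' a' q' H1 H2 H3 H4. pose proof (Had _ _ _ _ H1 H3).
    pose proof (Hc _ _ _ _ H2 H4) as H5. unfold vsub in H5.
    replace (vadd (vadd m (vopp z)) (vadd m' z)) with (vadd m m') in H5.
    pose proof (Hdom _ _ _ H H5). lra.
    rewrite vadd_swap4, (vadd_comm (vopp z) z), vadd_opp, vadd_zero. auto. }
  set (L := fun r => exists m a q, A (m, a) /\ Dom (vsub m z) q /\ r = a - q).
  assert (HL1 : bound L).
  { exists (vnorm z - 0). intros r [m [a [q [H1 [H2 H3]]]]]. subst r.
    apply (Key m a q vzero 0 (vnorm z)); auto. rewrite vadd_0l. apply Ha. }
  assert (HL2 : exists r, L r).
  { exists (0 - vnorm (vsub vzero z)). exists vzero, 0, (vnorm (vsub vzero z)). repeat split; auto. }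
  destruct (completeness L HL1 HL2) as [c [Hc1 Hc2]].
  assert (Lo : forall m a q, A (m, a) -> Dom (vsub m z) q -> a - q <= c).
  { intros m a q H1 H2. apply Hc1. exists m, a, q; auto. }
  assert (Up : forall m a q, A (m, a) -> Dom (vadd m z) q -> c <= q - a).
  { intros m a q H1 H2. apply Hc2. intros r [m0 [a0 [q0 [K1 [K2 K3]]]]]. subst r. eapply Key; eauto. }
  exists (fun p => exists m a t, A (m, a) /\ p = (vadd m (vscal t z), a + t * c)).
  split; [|split].
  - split; [|split; [|split]].
    + intros x a b [m [a1 [t [K1 K2]]]] [m' [a1' [t' [K1' K2']]]].
      injection K2 as Kx Ka. injection K2' as Kx' Ka'. subst a b.
      rewrite Kx in Kx'. destruct (Req_dec t t') as [Ht|Ht].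
      * subst t'.
        { rewrite (vadd_comm m), (vadd_comm m') in Kx'. apply vadd_cancel_l in Kx'. subst m'.
          rewrite (Hf _ _ _ K1 K1'). auto. }
      * exfalso. apply lin_eq_sub in Kx'.
        apply (Hz ((/ (t' - t)) * (a1 + (-1) * a1'))).
        replace z with (vscal (/ (t' - t)) (vadd m (vscal (-1) m'))).
        apply Hsc, Had; auto. rewrite <- vopp_scal. fold (vsub m m'). rewrite Kx', vscal_assoc.
        replace (/ (t' - t) * (t' - t)) with 1 by (field; lra). apply vscal_one.
    + intros x y a b [m [a1 [t [K1 K2]]]] [m' [a1' [t' [K1' K2']]]].
      injection K2 as Kx Ka. injection K2' as Kx' Ka'. subst.
      exists (vadd m m'), (a1 + a1'), (t + t'). split. apply Had; auto.
      f_equal. rewrite vadd_swap4, vscal_distr_s. auto. ring.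
    + intros s x a [m [a1 [t [K1 K2]]]]. injection K2 as Kx Ka. subst.
      exists (vscal s m), (s * a1), (s * t). split. apply Hsc; auto.
      f_equal. apply vscal_comb. ring.
    + intros x a q [m [a1 [t [K1 K2]]]] HD. injection K2 as Kx Ka. subst.
      destruct (Rtotal_order t 0) as [Ht|[Ht|Ht]].
      * pose proof (Hb _ _ (- / t) HD ltac:(apply Ropp_0_gt_lt_contravar, Rinv_lt_0_compat; auto)).
        rewrite vscal_comb in H. replace (- / t * t) with (-1) in H by (field; lra).
        rewrite <- vopp_scal in H. fold (vsub (vscal (- / t) m) z) in H.
        pose proof (Lo _ _ _ (Hsc (- / t) _ _ K1) H) as HL.
        assert (Hq : (a1 - q) * (- / t) <= c) by lra.
        assert (HT : t * ((a1 - q) * (- / t)) >= t * c) by (apply Rle_ge, Rmult_le_compat_neg_l; lra).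
        replace (t * ((a1 - q) * - / t)) with (q - a1) in HT by (field; lra). lra.
      * subst t. rewrite vscal_0s, vadd_zero in HD. pose proof (Hdom _ _ _ K1 HD). lra.
      * pose proof (Hb _ _ (/ t) HD ltac:(apply Rinv_0_lt_compat; auto)).
        rewrite vscal_comb in H. replace (/ t * t) with 1 in H by (field; lra). rewrite vscal_one in H.
        pose proof (Up _ _ _ (Hsc (/ t) _ _ K1) H) as HU.
        assert (HT : t * c <= t * (/ t * q - / t * a1)) by (apply Rmult_le_compat_l; lra).
        replace (t * (/ t * q - / t * a1)) with (q - a1) in HT by (field; lra). lra.
  - intros [m a] H. exists m, a, 0. split; auto. rewrite vscal_0s, vadd_zero. f_equal. ring.
  - intros H. apply (Hz c). apply H. exists vzero, 0, 1. split; auto. rewrite vadd_0l, vscal_one. f_equal. ring.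
Qed.
Lemma HB {X : NormedSpace} (Dom : X -> R -> Prop)
  (Hb : forall x q s, Dom x q -> 0 < s -> Dom (vscal s x) (s * q))
  (Hc : forall x y q1 q2, Dom x q1 -> Dom y q2 -> Dom (vadd x y) (q1 + q2))
  (Ha : forall x, Dom x (vnorm x))
  (He : forall q, Dom vzero q -> 0 <= q) :
  exists g : X -> R, (forall x y, g (vadd x y) = g x + g y) /\ (forall a x, g (vscal a x) = a * g x) /\
    (forall x q, Dom x q -> g x <= q).
Proof.
  destruct (@classical_sets.Zorn_bigcup (X * R)%type (PG Dom)) as [A [HA Hmax]].
  - intros F HF Htot. unfold classical_sets.bigcup.
    split; [|split; [|split]].
    + intros x a b [G1 F1 G1a] [G2 F2 G2b].
      destruct (Htot G1 G2 F1 F2) as [S|S].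
      * apply S in G1a. destruct (HF G2 F2) as [Hf _]. eapply Hf; eauto.
      * apply S in G2b. destruct (HF G1 F1) as [Hf _]. eapply Hf; eauto.
    + intros x y a b [G1 F1 G1a] [G2 F2 G2b].
      destruct (Htot G1 G2 F1 F2) as [S|S].
      * apply S in G1a. exists G2; auto. destruct (HF G2 F2) as [_ [Hf _]]. eapply Hf; eauto.
      * apply S in G2b. exists G1; auto. destruct (HF G1 F1) as [_ [Hf _]]. eapply Hf; eauto.
    + intros s x a [G1 F1 G1a]. exists G1; auto. destruct (HF G1 F1) as [_ [_ [Hf _]]]. eapply Hf; eauto.
    + intros x a q [G1 F1 G1a]. destruct (HF G1 F1) as [_ [_ [_ Hf]]]. eapply Hf; eauto.
  - assert (H0 : A (vzero, 0)).
    { apply NNPP. intro Hn. apply (Hmax (fun p => A p \/ p = (vzero, 0))).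
      - unfold classical_sets.proper, classical_sets.subset. split. intros p Hp. left; auto. intro S. apply Hn, S. right; auto.
      - destruct HA as [Hf [Had [Hsc Hdom]]].
        assert (Z : forall a, ~ A (vzero, a)).
        { intros a Ha0. apply Hn. replace (vzero, 0) with (vscal 0 (@vzero X), 0 * a).
          apply Hsc; auto. f_equal. apply vscal_0s. ring. }
        split; [|split; [|split]].
        + intros x a b [H1|H1] [H2|H2]; try (injection H1; intros; subst); try (injection H2; intros; subst).
          eapply Hf; eauto. all: try (exfalso; eapply Z; eauto; fail). auto.
        + intros x y a b [H1|H1] [H2|H2]; try (injection H1; intros; subst); try (injection H2; intros; subst).
          * left. apply Had; auto.
          * left. rewrite vadd_zero, Rplus_0_r. auto.
          * left. rewrite vadd_0l, Rplus_0_l. auto.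
          * right. rewrite vadd_zero, Rplus_0_r. auto.
        + intros s x a [H1|H1]. left; apply Hsc; auto. injection H1; intros; subst. right. rewrite vscal_0v. f_equal. ring.
        + intros x a q [H1|H1] HD. eapply Hdom; eauto. injection H1; intros; subst. apply He; auto. }
    assert (Htot : forall z, exists a, A (z, a)).
    { intros z. apply NNPP. intro Hn.
      destruct (HB_step Dom Hb Hc Ha A HA H0 z) as [B [HB1 [HB2 HB3]]].
      intros a Ha0. apply Hn. exists a; auto.
      apply (Hmax B); auto. unfold classical_sets.proper, classical_sets.subset. split; auto. }
    destruct HA as [Hf [Had [Hsc Hdom]]].
    exists (fun z => proj1_sig (constructive_indefinite_description _ (Htot z))).
    assert (Hg : forall z, A (z, proj1_sig (constructive_indefinite_description _ (Htot z)))).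
    { intros z. destruct (constructive_indefinite_description _ (Htot z)); auto. }
    split; [|split].
    + intros x y. eapply Hf. apply Hg. apply Had; apply Hg.
    + intros a x. eapply Hf. apply Hg. apply Hsc; apply Hg.
    + intros x q HD. eapply Hdom; eauto.
Qed.
Lemma conv_sub_identity {X : NormedSpace} (x0 y1 y2 : X) t :
  vsub x0 (vadd (vscal t y1) (vscal (1 - t) y2)) = vadd (vscal t (vsub x0 y1)) (vscal (1 - t) (vsub x0 y2)).
Proof.
  rewrite !vscal_sub, <- vsub_vadd, <- vscal_distr_s. replace (t + (1 - t)) with 1 by ring.
  rewrite vscal_one. auto.
Qed.

Lemma separation {X : NormedSpace} (D : X -> Prop)
  (Dconv : forall y1 y2 t, D y1 -> D y2 -> 0 <= t <= 1 -> D (vadd (vscal t y1) (vscal (1 - t) y2)))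
  x0 r (Hr : 0 < r) (Hd : forall y, D y -> r <= ndist x0 y) :
  exists g, DualBall g /\ forall y, D y -> g y <= g x0 - r.
Proof.
  set (Dom := fun (x : X) q => vnorm x <= q \/ exists l y, 0 < l /\ D y /\
     vnorm (vadd x (vscal l (vsub x0 y))) - l * r <= q).
  destruct (HB Dom) as [g [Hg1 [Hg2 Hg3]]].
  - intros x q s [H|[l [y [Hl [Hy H]]]]] Hs.
    + left. rewrite vnorm_scal, Rabs_right by lra. apply Rmult_le_compat_l; lra.
    + right. exists (s * l), y. split. apply Rmult_lt_0_compat; auto. split; auto.
      rewrite <- vscal_assoc, <- vscal_distr_v, vnorm_scal, Rabs_right by lra.
      replace (s * l * r) with (s * (l * r)) by ring. rewrite <- Rmult_minus_distr_l.
      apply Rmult_le_compat_l; lra.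
  - intros x y q1 q2 [H1|[l1 [y1 [Hl1 [Hy1 H1]]]]] [H2|[l2 [y2 [Hl2 [Hy2 H2]]]]].
    + left. pose proof (vnorm_triangle x y). lra.
    + right. exists l2, y2. split; auto. split; auto. rewrite <- vadd_assoc.
      pose proof (vnorm_triangle x (vadd y (vscal l2 (vsub x0 y2)))). lra.
    + right. exists l1, y1. split; auto. split; auto.
      rewrite (vadd_comm x y), <- vadd_assoc, (vadd_comm y).
      pose proof (vnorm_triangle (vadd x (vscal l1 (vsub x0 y1))) y). lra.
    + right. exists (l1 + l2), (vadd (vscal (l1 / (l1 + l2)) y1) (vscal (1 - l1 / (l1 + l2)) y2)).
      split. lra. split. apply Dconv; auto. split.
      apply Rmult_le_pos; [lra| left; apply Rinv_0_lt_compat; lra].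
      apply (Rmult_le_reg_r (l1 + l2)). lra. unfold Rdiv. rewrite Rmult_assoc, Rinv_l by lra. lra.
      rewrite conv_sub_identity, vscal_distr_v, !vscal_assoc.
      replace ((l1 + l2) * (l1 / (l1 + l2))) with l1 by (field; lra).
      replace ((l1 + l2) * (1 - l1 / (l1 + l2))) with l2 by (field; lra).
      rewrite vadd_swap4.
      pose proof (vnorm_triangle (vadd x (vscal l1 (vsub x0 y1))) (vadd y (vscal l2 (vsub x0 y2)))). lra.
  - intros x. left. lra.
  - intros q [H|[l [y [Hl [Hy H]]]]].
    + rewrite vnorm_vzero in H. auto.
    + rewrite vadd_0l, vnorm_scal, Rabs_right in H by lra. pose proof (Hd y Hy). unfold ndist in H0.
      assert (l * r <= l * vnorm (vsub x0 y)) by (apply Rmult_le_compat_l; lra). lra.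
  - assert (Hgd : DualBall g).
    { split; auto. split; auto. intros x. apply Rabs_le. split.
      - assert (g (vscal (-1) x) <= vnorm (vscal (-1) x)) by (apply Hg3; left; lra).
        rewrite Hg2, vnorm_scal in H. replace (Rabs (-1)) with 1 in H by (rewrite Rabs_left; lra). lra.
      - apply Hg3. left; lra. }
    exists g. split; auto. intros y Hy.
    assert (g (vsub y x0) <= - r).
    { apply Hg3. right. exists 1, y. split. lra. split; auto.
      rewrite vscal_one. unfold vsub. rewrite <- vadd_assoc, (vadd_assoc (vopp x0) x0), (vadd_comm (vopp x0) x0), vadd_opp, vadd_0l, vadd_opp, vnorm_vzero. lra. }
    rewrite dual_sub in H by auto. lra.
Qed.
Lemma notClCo_dist {X : NormedSpace} (E : X -> Prop) c : ~ ClCo E c ->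
  exists r, 0 < r /\ forall y, Co E y -> r <= ndist c y.
Proof.
  intros H. apply NNPP. intro H2. apply H. intros e He. apply NNPP. intro H3.
  apply H2. exists e. split; auto. intros y Hy. apply Rnot_lt_le. intro H4. apply H3. exists y; auto.
Qed.

Lemma sep_ClCo {X : NormedSpace} (E : X -> Prop) c : ~ ClCo E c ->
  exists g r, DualBall g /\ 0 < r /\ forall y, ClCo E y -> g y <= g c - r.
Proof.
  intros H. destruct (notClCo_dist E c H) as [r [Hr Hd]].
  destruct (separation (Co E)) with (x0 := c) (r := r) as [g [Hg Hg2]]; auto.
  intros; apply Co_convex; auto.
  exists g, r. split; auto. split; auto. intros y Hy. apply (ClCo_halfspace E g (g c - r) y Hg); auto.
  intros x Hx. apply Hg2. apply Co_single; auto.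
Qed.

Lemma lub_approx (E : R -> Prop) s e : is_lub E s -> 0 < e -> exists r, E r /\ r > s - e.
Proof.
  intros [H1 H2] He. apply NNPP. intro H. assert (is_upper_bound E (s - e)).
  { intros r Hr. apply Rnot_lt_le. intro H3. apply H. exists r. split; auto. }
  apply H2 in H0. lra.
Qed.

Definition img {X : NormedSpace} (E : X -> Prop) (k : X -> R) : R -> Prop := fun r => exists y, E y /\ r = k y.

Lemma sup_ex {X : NormedSpace} (A : X -> Prop) (HAne : exists a, A a) (HAball : forall a, A a -> InUnitBall a)
  k : DualBall k -> exists s, is_lub (img A k) s /\ is_lub (img (ClCo A) k) s.
Proof.
  intros Hk. destruct (completeness (img A k)) as [s Hs].
  - exists 1. intros r [y [Hy Hr]]. subst. pose proof (dual_bound k y Hk). pose proof (HAball y Hy).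
    unfold InUnitBall in H0. pose proof (Rle_abs (k y)). lra.
  - destruct HAne as [a Ha]. exists (k a), a; auto.
  - exists s. split; auto. destruct Hs as [H1 H2]. split.
    + intros r [y [Hy Hr]]. subst. apply (ClCo_halfspace A k s y Hk); auto.
      intros x Hx. apply H1. exists x; auto.
    + intros b Hb. apply H2. intros r [y [Hy Hr]]. apply Hb. exists y. split; auto. apply ClCo_incl; auto.
Qed.

Lemma slice_iff {X : NormedSpace} (E : X -> Prop) k s e y : is_lub (img E k) s ->
  (Slice k E e y <-> E y /\ k y > s - e).
Proof.
  intros Hs. split.
  - intros [Hy [s' [Hs' H]]]. split; auto. rewrite (is_lub_u _ _ _ Hs Hs'). auto.
  - intros [Hy H]. split; auto. exists s; split; auto.
Qed.

Lemma lub_ub {X : NormedSpace} (E : X -> Prop) k s y : is_lub (img E k) s -> E y -> k y <= s.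
Proof. intros [H1 _] Hy. apply H1. exists y; auto. Qed.

Lemma C_ball {X : NormedSpace} (A : X -> Prop) (HAball : forall a, A a -> InUnitBall a) y :
  ClCo A y -> vnorm y <= 1.
Proof. apply ClCo_ball. exact HAball. Qed.

Lemma dual_le1 {X : NormedSpace} (A : X -> Prop) (HAball : forall a, A a -> InUnitBall a) k y :
  DualBall k -> ClCo A y -> - 1 <= k y <= 1.
Proof.
  intros Hk Hy. pose proof (C_ball A HAball y Hy). pose proof (dual_bound k y Hk).
  pose proof (Rle_abs (k y)). pose proof (Rle_abs (- k y)). rewrite Rabs_Ropp in H2. lra.
Qed.

Lemma rsum_weighted (w f : nat -> R) a b n :
  rsum (fun j => w j * (a + b * f j)) n = a * rsum w n + b * rsum (fun j => w j * f j) n.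
Proof. induction n; simpl. ring. rewrite IHn. ring. Qed.
Definition ind {X : NormedSpace} (E : X -> Prop) (x : X) : R :=
  if excluded_middle_informative (E x) then 1 else 0.

Lemma ind_1 {X : NormedSpace} (E : X -> Prop) x : E x -> ind E x = 1.
Proof. intros H. unfold ind. destruct (excluded_middle_informative (E x)); tauto. Qed.
Lemma ind_0 {X : NormedSpace} (E : X -> Prop) x : ~ E x -> ind E x = 0.
Proof. intros H. unfold ind. destruct (excluded_middle_informative (E x)); tauto. Qed.
Lemma ind_range {X : NormedSpace} (E : X -> Prop) x : 0 <= ind E x <= 1.
Proof. unfold ind. destruct (excluded_middle_informative (E x)); lra. Qed.

Lemma ndist_le_norms {X : NormedSpace} (a b : X) : ndist a b <= vnorm a + vnorm b.
Proof. unfold ndist, vsub. rewrite <- (vnorm_opp b). apply vnorm_triangle. Qed.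

Lemma cone {X : NormedSpace} (A : X -> Prop) (HAne : exists a, A a) (HAball : forall a, A a -> InUnitBall a)
  eps (HAdent : NonDentable eps A) (E P : X -> Prop) c0 rho :
  (forall x, E x -> ClCo A x) -> (forall x, P x -> ClCo A x) -> 0 <= rho -> rho < eps ->
  (forall x y, P x -> P y -> ndist x y <= rho) -> ClCo A c0 -> ~ ClCo E c0 ->
  (forall c, ClCo A c -> ClCo (fun x => E x \/ P x) c) -> False.
Proof.
  intros HE HP Hrho0 Hrho HPd Hc0 Hnc0 Hcov.
  destruct (sep_ClCo E c0 Hnc0) as [k [r [Hk [Hr Hkr]]]].
  destruct (sup_ex A HAne HAball k Hk) as [s [HsA HsC]].
  assert (Hc0s : k c0 <= s) by (eapply lub_ub; eauto).
  assert (HkE : forall x, E x -> k x <= s - r).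
  { intros x Hx. pose proof (Hkr x (ClCo_incl E x Hx)). lra. }
  assert (HkP : forall x, P x -> k x <= s).
  { intros x Hx. eapply lub_ub; eauto. }
  set (eta := (eps - rho) * r / (2 * (2 * r + 8))).
  assert (Heta : 0 < eta).
  { unfold eta. apply Rmult_lt_0_compat. apply Rmult_lt_0_compat; lra. apply Rinv_0_lt_compat; lra. }
  assert (Heta2 : eta * (2 * r + 8) = (eps - rho) * r / 2) by (unfold eta; field; lra).
  assert (Sub : forall u, A u -> k u > s - eta -> exists n p w,
     (forall i, (i < n)%nat -> (E (p i) \/ P (p i)) /\ 0 <= w i) /\ rsum w n = 1 /\
     ndist u (vsum (fun i => vscal (w i) (p i)) n) < eta /\
     r * rsum (fun i => w i * ind E (p i)) n < 2 * eta).
  { intros u Hu Hku. destruct (Hcov u (ClCo_incl A u Hu) eta Heta) as [z [[n [p [w [H1 [H2 H3]]]]] Hd]].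
    subst z. exists n, p, w. split; auto. split; auto. split; auto.
    pose proof (dual_lip k u _ Hk : k u <= k (vsum (fun i => vscal (w i) (p i)) n) + ndist u _).
    rewrite dual_vsum in H by auto.
    assert (rsum (fun i => w i * k (p i)) n <= rsum (fun i => w i * (s + (- r) * ind E (p i))) n).
    { apply rsum_le. intros i Hi. destruct (H1 i Hi) as [[He|Hp] Hw]; apply Rmult_le_compat_l; auto.
      rewrite ind_1 by auto. pose proof (HkE _ He). lra.
      destruct (classic (E (p i))) as [He|He].
      rewrite ind_1 by auto. pose proof (HkE _ He). lra.
      rewrite ind_0 by auto. pose proof (HkP _ Hp). lra. }
    rewrite rsum_weighted, H2 in H0. lra. }
  destruct (HAdent k eta Hk Heta) as [x [y [Hx [Hy Hxy]]]].
  apply (slice_iff A k s eta x HsA) in Hx. apply (slice_iff A k s eta y HsA) in Hy.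
  destruct Hx as [Hx Hkx]. destruct Hy as [Hy Hky].
  destruct (Sub x Hx Hkx) as [n [p [w [H1 [H2 [H3 H4]]]]]].
  destruct (Sub y Hy Hky) as [m [q [v [K1 [K2 [K3 K4]]]]]].
  set (z := vsum (fun i => vscal (w i) (p i)) n) in *.
  set (z' := vsum (fun i => vscal (v i) (q i)) m) in *.
  set (lam := rsum (fun i => w i * ind E (p i)) n) in *.
  set (lam' := rsum (fun i => v i * ind E (q i)) m) in *.
  assert (Hpin : forall i, (i < n)%nat -> vnorm (p i) <= 1).
  { intros i Hi. destruct (H1 i Hi) as [[H|H] _]; apply (C_ball A HAball); auto. }
  assert (Hqin : forall i, (i < m)%nat -> vnorm (q i) <= 1).
  { intros i Hi. destruct (K1 i Hi) as [[H|H] _]; apply (C_ball A HAball); auto. }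
  assert (Hzz : ndist z z' <= rho + 2 * lam + 2 * lam').
  { eapply Rle_trans. apply ndist_comb; auto. intros i Hi; apply H1; auto.
    apply Rle_trans with (rsum (fun i => w i * ((rho + 2 * lam') + 2 * ind E (p i))) n).
    - apply rsum_le. intros i Hi. apply Rmult_le_compat_l. apply H1; auto.
      rewrite ndist_sym. eapply Rle_trans. apply ndist_comb; auto. intros j Hj; apply K1; auto.
      apply Rle_trans with (rsum (fun j => v j * ((rho + 2 * ind E (p i)) + 2 * ind E (q j))) m).
      + apply rsum_le. intros j Hj. apply Rmult_le_compat_l. apply K1; auto.
        pose proof (ind_range E (p i)). pose proof (ind_range E (q j)).
        destruct (classic (E (p i))) as [Ep|Ep].
        * rewrite (ind_1 E (p i) Ep). pose proof (ndist_le_norms (q j) (p i)).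
          pose proof (Hpin i Hi). pose proof (Hqin j Hj). lra.
        * destruct (classic (E (q j))) as [Eq|Eq].
          -- rewrite (ind_1 E (q j) Eq). pose proof (ndist_le_norms (q j) (p i)).
             pose proof (Hpin i Hi). pose proof (Hqin j Hj). lra.
          -- rewrite (ind_0 E _ Ep), (ind_0 E _ Eq).
             destruct (H1 i Hi) as [[?|Pp] _]; [tauto|]. destruct (K1 j Hj) as [[?|Pq] _]; [tauto|].
             pose proof (HPd _ _ Pq Pp). lra.
      + rewrite rsum_weighted, K2. fold lam'. lra.
    - rewrite rsum_weighted, H2. fold lam. lra. }
  pose proof (ndist_tri x z y). pose proof (ndist_tri z z' y). rewrite (ndist_sym z' y) in H0.
  assert (eps * r < (eta + (rho + 2 * lam + 2 * lam') + eta) * r).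
  { apply Rmult_lt_compat_r; auto. lra. }
  nra.
Qed.
Definition smallset {X : NormedSpace} (eps : R) (K : X -> Prop) : Prop :=
  exists rho, 0 <= rho /\ rho < eps /\ forall x y, K x -> K y -> ndist x y <= rho.

Lemma subslice {X : NormedSpace} (A : X -> Prop) (HAne : exists a, A a) (HAball : forall a, A a -> InUnitBall a)
  eps (HAdent : NonDentable eps A) (Ks : list (X -> Prop)) :
  (forall K, In K Ks -> smallset eps K) ->
  forall E, (forall x, E x -> ClCo A x) -> (exists c, ClCo A c /\ ~ ClCo E c) ->
  exists k e, DualBall k /\ 0 < e /\ (forall y, Slice k (ClCo A) e y -> ~ ClCo E y) /\
    (forall K y, In K Ks -> Slice k (ClCo A) e y -> ~ K y).
Proof.
  induction Ks as [|K Ks IH]; intros HKs E HE [c [Hc Hnc]].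
  - destruct (sep_ClCo E c Hnc) as [k [r [Hk [Hr Hkr]]]].
    destruct (sup_ex A HAne HAball k Hk) as [s [HsA HsC]].
    assert (k c <= s) by (eapply lub_ub; eauto).
    exists k, (s - k c + r / 2). split; auto. split. lra. split.
    + intros y Hy Hey. apply (slice_iff _ k s _ y HsC) in Hy. destruct Hy. pose proof (Hkr y Hey). lra.
    + intros K y [].
  - destruct (classic (exists c, ClCo A c /\ ~ ClCo (fun x => E x \/ (K x /\ ClCo A x)) c)) as [Hex|Hnex].
    + destruct (IH (fun K0 H0 => HKs K0 (or_intror H0)) (fun x => E x \/ (K x /\ ClCo A x))) as [k [e [Hk [He [H1 H2]]]]]; auto.
      { intros x [Hx|[_ Hx]]; auto. }
      exists k, e. split; auto. split; auto. split.
      * intros y Hy Hey. apply (H1 y Hy). eapply ClCo_mono; [|exact Hey]. intros; left; auto.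
      * intros K0 y [HK0|HK0] Hy.
        -- subst K0. intros HKy. apply (H1 y Hy). apply ClCo_incl. right. split; auto. destruct Hy; auto.
        -- apply (H2 K0 y HK0 Hy).
    + exfalso. destruct (HKs K (or_introl eq_refl)) as [rho [Hr0 [Hr1 Hr2]]].
      apply (cone A HAne HAball eps HAdent E (fun x => K x /\ ClCo A x) c rho); auto.
      * intros x [_ Hx]; auto.
      * intros x y [Hx _] [Hy _]. auto.
      * intros c0 Hc0. apply NNPP. intro Hn. apply Hnex. exists c0. split; auto.
Qed.
Lemma div_le_helper a b c : 0 < c -> a <= b * c -> a / c <= b.
Proof. intros Hc H. apply (Rmult_le_reg_r c); auto. unfold Rdiv. rewrite Rmult_assoc, Rinv_l by lra. lra. Qed.
Lemma div_ge_helper a b c : 0 < c -> b * c <= a -> b <= a / c.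
Proof. intros Hc H. apply (Rmult_le_reg_r c); auto. unfold Rdiv. rewrite Rmult_assoc, Rinv_l by lra. lra. Qed.

Lemma dual_comb {X : NormedSpace} (f g : X -> R) t : DualBall f -> DualBall g -> 0 < t ->
  DualBall (fun x => (f x + t * g x) / (1 + t)).
Proof.
  intros Hf Hg Ht. split; [|split].
  - intros x y. rewrite !dual_add by auto. field. lra.
  - intros a x. rewrite !dual_scal by auto. field. lra.
  - intros x. pose proof (dual_bound f x Hf). pose proof (dual_bound g x Hg).
    pose proof (Rle_abs (f x)). pose proof (Rle_abs (- f x)). rewrite Rabs_Ropp in H2.
    pose proof (Rle_abs (g x)). pose proof (Rle_abs (- g x)). rewrite Rabs_Ropp in H4.
    apply Rabs_le. split.
    + apply div_ge_helper. lra. nra.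
    + apply div_le_helper. lra. nra.
Qed.

Definition goodP {X : NormedSpace} (A : X -> Prop) (Ks : list (X -> Prop)) (f : X -> R) (d gam' : R)
  (g : X -> R) (e : R) (y : X) : Prop :=
  DualBall g /\ 0 < e /\ Slice g (ClCo A) (gam' * e / 2) y /\
  (forall y0, Slice g (ClCo A) e y0 -> Slice f (ClCo A) d y0) /\
  (forall K y0, In K Ks -> Slice g (ClCo A) e y0 -> ~ K y0).

Lemma child_claim {X : NormedSpace} (A : X -> Prop) (HAne : exists a, A a) (HAball : forall a, A a -> InUnitBall a)
  eps (HAdent : NonDentable eps A) (Ks : list (X -> Prop)) (HKs : forall K, In K Ks -> smallset eps K)
  gam gam' (Hg : 0 < gam < 1) (Hg' : 0 < gam' < 1) f d xb (Hf : DualBall f) (Hd : 0 < d) (Hxb : A xb)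
  (Hsl : Slice f (ClCo A) (gam * d / 2) xb) :
  exists z, Co (fun y => A y /\ exists g e, goodP A Ks f d gam' g e y) z /\ ndist xb z < 2 * gam.
Proof.
  set (G := fun y => A y /\ exists g e, goodP A Ks f d gam' g e y).
  apply NNPP. intro Hno.
  destruct (separation (Co G)) with (x0 := xb) (r := 2 * gam) as [g [Hgd Hgsep]].
  { intros; apply Co_convex; auto. } lra.
  { intros y Hy. apply Rnot_lt_le. intro H. apply Hno. exists y; auto. }
  set (t := d * (3 - gam) / 8).
  assert (Ht : 0 < t) by (unfold t; apply Rmult_lt_0_compat; [apply Rmult_lt_0_compat|]; lra).
  set (h := fun x => (f x + t * g x) / (1 + t)).
  assert (Hh : DualBall h) by (apply dual_comb; auto).
  set (eta0 := gam * d * (1 - gam) / (4 * (1 + t))).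
  assert (Heta0 : 0 < eta0).
  { unfold eta0. apply Rmult_lt_0_compat. apply Rmult_lt_0_compat. apply Rmult_lt_0_compat; lra. lra.
    apply Rinv_0_lt_compat; lra. }
  assert (Heta0' : (1 + t) * eta0 = gam * d * (1 - gam) / 4) by (unfold eta0; field; lra).
  destruct (sup_ex A HAne HAball f Hf) as [sf [HsfA HsfC]].
  destruct (sup_ex A HAne HAball h Hh) as [sh [HshA HshC]].
  assert (HxbC : ClCo A xb) by (apply ClCo_incl; auto).
  apply (slice_iff _ f sf _ xb HsfC) in Hsl. destruct Hsl as [_ Hfxb].
  assert (Region : forall c, Slice h (ClCo A) eta0 c -> Slice f (ClCo A) d c /\ g c > g xb - 2 * gam).
  { intros c Hc. apply (slice_iff _ h sh _ c HshC) in Hc. destruct Hc as [HcC Hhc].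
    assert (h xb <= sh) by (eapply lub_ub; eauto).
    assert (f c <= sf) by (eapply lub_ub; eauto).
    pose proof (dual_le1 A HAball g c Hgd HcC). pose proof (dual_le1 A HAball g xb Hgd HxbC).
    assert (Key : f c + t * g c > f xb + t * g xb - (1 + t) * eta0).
    { unfold h in *. assert ((f c + t * g c) / (1 + t) > (f xb + t * g xb) / (1 + t) - eta0) by lra.
      apply (Rmult_lt_compat_r (1 + t)) in H3; [|lra].
      replace ((f c + t * g c) / (1 + t) * (1 + t)) with (f c + t * g c) in H3 by (field; lra).
      replace (((f xb + t * g xb) / (1 + t) - eta0) * (1 + t)) with (f xb + t * g xb - (1 + t) * eta0) in H3 by (field; lra).
      lra. }
    rewrite Heta0' in Key. split.
    - apply (slice_iff _ f sf _ c HsfC). split; auto.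
      assert (t * (g xb - g c) >= - 2 * t) by nra.
      assert (2 * t = d * (3 - gam) / 4) by (unfold t; field).
      assert (0 <= d * ((1 - gam) * (1 - gam))) by (apply Rmult_le_pos; [lra|nra]).
      nra.
    - assert (2 * gam * t = gam * d * (3 - gam) / 4) by (unfold t; field).
      assert (t * (g c - g xb + 2 * gam) > 0) by nra.
      assert (g c - g xb + 2 * gam > 0).
      { apply Rnot_le_lt. intro Hle. assert (t * (g c - g xb + 2 * gam) <= 0) by nra. lra. }
      lra. }
  set (E0 := fun x => ClCo A x /\ ~ Slice h (ClCo A) eta0 x).
  assert (HE0 : forall y, ClCo E0 y -> h y <= sh - eta0).
  { intros y Hy. apply (ClCo_halfspace E0 h _ y Hh); auto. intros x [HxC Hx].
    apply Rnot_lt_le. intro H. apply Hx. apply (slice_iff _ h sh _ x HshC). split; auto. }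
  destruct (lub_approx _ _ _ HshA Heta0) as [r0 [[a0 [Ha0 Hr0]] Hr0']]. subst r0.
  destruct (subslice A HAne HAball eps HAdent Ks HKs E0) as [k [e [Hk [He [Hav1 Hav2]]]]].
  { intros x [Hx _]; auto. }
  { exists a0. split. apply ClCo_incl; auto. intro H. apply HE0 in H. lra. }
  assert (InR : forall y, Slice k (ClCo A) e y -> Slice h (ClCo A) eta0 y).
  { intros y Hy. apply NNPP. intro Hn. apply (Hav1 y Hy). apply ClCo_incl. split; auto. destruct Hy; auto. }
  destruct (sup_ex A HAne HAball k Hk) as [sk [HskA HskC]].
  assert (Hge : 0 < gam' * e / 2) by (apply Rmult_lt_0_compat; [apply Rmult_lt_0_compat|]; lra).
  destruct (lub_approx _ _ _ HskA Hge) as [r1 [[a1 [Ha1 Hr1]] Hr1']]. subst r1.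
  assert (Ha1C : ClCo A a1) by (apply ClCo_incl; auto).
  assert (Ha1S : Slice k (ClCo A) e a1).
  { apply (slice_iff _ k sk _ a1 HskC). split; auto. assert (gam' * e / 2 < e) by nra. lra. }
  assert (HG : G a1).
  { split; auto. exists k, e. split; auto. split; auto. split.
    - apply (slice_iff _ k sk _ a1 HskC). split; auto.
    - split. intros y0 Hy0. apply Region, InR; auto. auto. }
  pose proof (Hgsep a1 (Co_single G a1 HG)).
  destruct (Region a1 (InR a1 Ha1S)). lra.
Qed.
Lemma child_step {X : NormedSpace} (A : X -> Prop) (HAne : exists a, A a) (HAball : forall a, A a -> InUnitBall a)
  eps (HAdent : NonDentable eps A) (Ks : list (X -> Prop)) (HKs : forall K, In K Ks -> smallset eps K)
  gam gam' (Hg : 0 < gam < 1) (Hg' : 0 < gam' < 1) f d xb (Hf : DualBall f) (Hd : 0 < d) (Hxb : A xb)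
  (Hsl : Slice f (ClCo A) (gam * d / 2) xb) :
  exists q (ys : nat -> X) (gs : nat -> X -> R) (es : nat -> R), (1 <= q)%nat /\
    (forall i, (1 <= i <= q)%nat -> A (ys i) /\ goodP A Ks f d gam' (gs i) (es i) (ys i)) /\
    InCoPlusBall xb ys q (2 * gam).
Proof.
  destruct (child_claim A HAne HAball eps HAdent Ks HKs gam gam' Hg Hg' f d xb Hf Hd Hxb Hsl)
    as [z [[n [p [w [H1 [H2 H3]]]]] Hz]].
  assert (Hex : forall i, exists ge : (X -> R) * R, (i < n)%nat -> goodP A Ks f d gam' (fst ge) (snd ge) (p i)).
  { intros i. destruct (Nat.lt_ge_cases i n) as [Hi|Hi].
    - destruct (H1 i Hi) as [[_ [g [e He]]] _]. exists (g, e). auto.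
    - exists (fun _ => 0, 0). intros; lia. }
  set (ge := fun i => proj1_sig (constructive_indefinite_description _ (Hex i))).
  assert (Hge : forall i, (i < n)%nat -> goodP A Ks f d gam' (fst (ge i)) (snd (ge i)) (p i)).
  { intros i Hi. unfold ge. destruct (constructive_indefinite_description _ (Hex i)); simpl; auto. }
  exists n, (fun i => p (i - 1)%nat), (fun i => fst (ge (i - 1)%nat)), (fun i => snd (ge (i - 1)%nat)).
  split; [|split].
  - destruct n. simpl in H2. lra. lia.
  - intros i Hi. split. apply H1; lia. apply Hge; lia.
  - exists z. split; auto. exists n, p, w. split; [|split]; auto.
    intros i Hi. split. exists (S i). split. lia. simpl. rewrite Nat.sub_0_r. auto. apply H1; auto.
Qed.
Definition ND (X : NormedSpace) := (X * (X -> R) * R)%type.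
Definition ballK {X : NormedSpace} (delta : R) (p : X) : X -> Prop := fun y => ndist y p < delta.

Record Lev (X : NormedSpace) := mkLev { lnodes : list (list nat); ldat : list nat -> ND X; lpts : list X }.
Arguments mkLev {X} _ _ _.
Arguments lnodes {X} _.
Arguments ldat {X} _ _.
Arguments lpts {X} _.

Definition KsOf {X : NormedSpace} (B : nat -> X -> Prop) (delta : R) n (L : Lev X) : list (X -> Prop) :=
  B n :: map (ballK delta) (lpts L).

Definition step {X : NormedSpace} (cf : nat -> list (X -> Prop) -> ND X -> nat * (nat -> ND X))
  (B : nat -> X -> Prop) (delta : R) (n : nat) (L : Lev X) : Lev X :=
  let ch := fun b => cf n (KsOf B delta n L) (ldat L b) in
  let nodes' := flat_map (fun b => map (fun i => b ++ [i]) (seq 1 (fst (ch b)))) (lnodes L) in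
  let dat' := fun b' => snd (ch (removelast b')) (last b' 0%nat) in
  mkLev nodes' dat' (lpts L ++ map (fun b => fst (fst (dat' b))) nodes').

Fixpoint lev {X : NormedSpace} cf B delta (root : ND X) (n : nat) : Lev X :=
  match n with
  | O => mkLev [[]] (fun _ => root) [fst (fst root)]
  | S m => step cf B delta m (lev cf B delta root m)
  end.




Definition Dg {X : NormedSpace} cf B delta (root : ND X) (b : list nat) : ND X :=
  ldat (lev cf B delta root (length b)) b.
Definition Tg {X : NormedSpace} cf B delta (root : ND X) (b : list nat) : Prop :=
  In b (lnodes (lev cf B delta root (length b))).
Definition kg {X : NormedSpace} cf B delta (root : ND X) (b : list nat) : nat :=
  fst (cf (length b) (KsOf B delta (length b) (lev cf B delta root (length b))) (Dg cf B delta root b)).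

Lemma lev_len {X : NormedSpace} cf B delta (root : ND X) n b : In b (lnodes (lev cf B delta root n)) -> length b = n.
Proof.
  revert b. induction n; intros b H; simpl in H.
  - destruct H as [H|[]]. subst; auto.
  - unfold step in H; simpl in H. apply in_flat_map in H. destruct H as [b0 [H1 H2]].
    apply in_map_iff in H2. destruct H2 as [i [H3 _]]. subst. rewrite length_app. simpl. rewrite (IHn b0 H1). lia.
Qed.

Lemma Dg_child {X : NormedSpace} cf B delta (root : ND X) b i :
  Dg cf B delta root (b ++ [i]) = snd (cf (length b) (KsOf B delta (length b) (lev cf B delta root (length b))) (Dg cf B delta root b)) i.
Proof.
  unfold Dg. rewrite length_app. simpl. rewrite Nat.add_1_r. simpl. unfold step. simpl.
  rewrite removelast_last, last_last. auto.
Qed.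

Lemma Tg_child {X : NormedSpace} cf B delta (root : ND X) b i :
  Tg cf B delta root (b ++ [i]) <-> Tg cf B delta root b /\ (1 <= i <= kg cf B delta root b)%nat.
Proof.
  unfold Tg, kg, Dg. rewrite length_app. simpl. rewrite Nat.add_1_r. simpl. unfold step. simpl.
  rewrite in_flat_map. split.
  - intros [b0 [H1 H2]]. apply in_map_iff in H2. destruct H2 as [i0 [H3 H4]].
    apply app_inj_tail in H3. destruct H3; subst. split; auto. apply in_seq in H4. lia.
  - intros [H1 H2]. exists b. split; auto. apply in_map_iff. exists i. split; auto. apply in_seq. lia.
Qed.

Lemma Tg_nil {X : NormedSpace} cf B delta (root : ND X) : Tg cf B delta root [].
Proof. unfold Tg. simpl. auto. Qed.

Lemma lev_pts {X : NormedSpace} cf B delta (root : ND X) n p :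
  Tg cf B delta root p -> (length p <= n)%nat -> In (fst (fst (Dg cf B delta root p))) (lpts (lev cf B delta root n)).
Proof.
  induction n; intros Hp Hl.
  - destruct p; [|simpl in Hl; lia]. unfold Dg. simpl. auto.
  - simpl. try unfold step. simpl. apply in_or_app.
    destruct (Nat.le_gt_cases (length p) n) as [H|H].
    + left. apply IHn; auto.
    + right. assert (length p = S n) by lia. unfold Tg in Hp. rewrite H0 in Hp. simpl in Hp.
      apply in_map_iff. exists p. split; auto. unfold Dg. rewrite H0. simpl. unfold step. simpl. auto.
Qed.
Definition inv {X : NormedSpace} (A : X -> Prop) (dl : nat -> R) (n : nat) (nd : ND X) : Prop :=
  A (fst (fst nd)) /\ DualBall (snd (fst nd)) /\ 0 < snd nd /\
  Slice (snd (fst nd)) (ClCo A) (dl n * snd nd / 2) (fst (fst nd)).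

Definition cspec {X : NormedSpace} (A : X -> Prop) eps (dl : nat -> R) n (Ks : list (X -> Prop)) (nd : ND X)
  (r : nat * (nat -> ND X)) : Prop :=
  inv A dl n nd -> (forall K, In K Ks -> smallset eps K) ->
  (1 <= fst r)%nat /\
  (forall i, (1 <= i <= fst r)%nat -> A (fst (fst (snd r i))) /\
     goodP A Ks (snd (fst nd)) (snd nd) (dl (S n)) (snd (fst (snd r i))) (snd (snd r i)) (fst (fst (snd r i)))) /\
  InCoPlusBall (fst (fst nd)) (fun i => fst (fst (snd r i))) (fst r) (2 * dl n).

Lemma cspec_ex {X : NormedSpace} (A : X -> Prop) (HAne : exists a, A a) (HAball : forall a, A a -> InUnitBall a)
  eps (HAdent : NonDentable eps A) dl (Hdl : forall n, 0 < dl n < 1) n Ks (nd : ND X) :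
  exists r, cspec A eps dl n Ks nd r.
Proof.
  destruct (classic (inv A dl n nd /\ forall K, In K Ks -> smallset eps K)) as [[Hi HK]|Hn].
  - destruct nd as [[x f] d]. destruct Hi as [H1 [H2 [H3 H4]]]. simpl in *.
    destruct (child_step A HAne HAball eps HAdent Ks HK (dl n) (dl (S n)) (Hdl n) (Hdl (S n)) f d x H2 H3 H1 H4)
      as [q [ys [gs [es [K1 [K2 K3]]]]]].
    exists (q, fun i => (ys i, gs i, es i)). intros _ _. simpl. split; auto.
  - exists (O, fun _ => nd). intros Hi HK. exfalso. apply Hn; auto.
Qed.

Lemma KsOf_small {X : NormedSpace} eps (B : nat -> X -> Prop) delta n (L : Lev X) :
  (forall n, smallset eps (B n)) -> 0 < delta -> 2 * delta < eps ->
  forall K, In K (KsOf B delta n L) -> smallset eps K.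
Proof.
  intros HB Hd Hde K [HK|HK].
  - subst; auto.
  - apply in_map_iff in HK. destruct HK as [p [HK _]]. subst K.
    exists (2 * delta). split. lra. split. auto. intros x y Hx Hy. unfold ballK in *.
    pose proof (ndist_tri x p y). rewrite (ndist_sym p y) in H. lra.
Qed.

Lemma slice_mono {X : NormedSpace} (f : X -> R) E e1 e2 y : e1 <= e2 -> Slice f E e1 y -> Slice f E e2 y.
Proof. intros He [H1 [s [H2 H3]]]. split; auto. exists s. split; auto. lra. Qed.

Lemma tree_inv {X : NormedSpace} (A : X -> Prop) eps dl cf (B : nat -> X -> Prop) delta (root : ND X)
  (Hcf : forall n Ks nd, cspec A eps dl n Ks nd (cf n Ks nd))
  (HB : forall n, smallset eps (B n)) (Hd : 0 < delta) (Hde : 2 * delta < eps)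
  (Hroot : inv A dl 0 root) :
  forall b, Tg cf B delta root b -> inv A dl (length b) (Dg cf B delta root b).
Proof.
  intros b. induction b as [|i b IH] using rev_ind; intros Hb.
  - unfold Dg. simpl. auto.
  - apply Tg_child in Hb. destruct Hb as [Hb Hi]. specialize (IH Hb).
    destruct (Hcf (length b) (KsOf B delta (length b) (lev cf B delta root (length b))) (Dg cf B delta root b) IH
      (KsOf_small eps B delta _ _ HB Hd Hde)) as [_ [H2 _]].
    destruct (H2 i Hi) as [HA [Hg [He [Hs _]]]].
    rewrite Dg_child. rewrite length_app. simpl. rewrite Nat.add_1_r.
    split; auto.
Qed.


Theorem mainTheorem9 (X : NormedSpace) (HX : Banach X) (eps : R) (Heps : 0 < eps)
  (A : X -> Prop) (HAne : exists a, A a) (HAball : forall a, A a -> InUnitBall a)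
  (HAsep : SeparableSet A) (HAdent : NonDentable eps A)
  (delta : R) (Hdelta0 : 0 < delta) (Hdelta : delta < eps / 2)
  (B : nat -> X -> Prop)
  (HBopen : forall i, RelOpen (B i) (ClCo A))
  (HBdiam : forall i, DiamLt (B i) eps)
  (HBcover : forall c, ClCo A c -> exists i, B i c)
  (dl : nat -> R) (Hdl : forall n, 0 < dl n < 1) :
  exists (T : list nat -> Prop) (k : list nat -> nat) (x : list nat -> X)
         (f : list nat -> X -> R) (d : list nat -> R),
    FinBranchTree T k /\
    (forall b, T b -> (1 <= k b)%nat) /\
    (forall b, T b -> A (x b) /\ DualBall (f b) /\ 0 < d b) /\
    (forall n,
      (* (1) *)
      (forall b, T b -> length b = n ->
         Slice (f b) (ClCo A) (dl n * d b / 2) (x b) /\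
         (forall y, Slice (f b) (ClCo A) (dl n * d b / 2) y -> A y ->
                    Slice (f b) (ClCo A) (d b) y)) /\
      (* (2) *)
      ((1 <= n)%nat -> forall b, T b -> length b = n ->
         (forall y, Slice (f b) (ClCo A) (d b) y -> ~ B (n - 1)%nat y) /\
         (forall y, Slice (f b) (ClCo A) (d b) y ->
            forall p, T p -> (length p <= n - 1)%nat -> ~ (ndist y (x p) < delta))) /\
      (* (3) *)
      ((1 <= n)%nat -> forall b, T b -> length b = (n - 1)%nat ->
         (forall i, (1 <= i <= k b)%nat ->
            forall y, Slice (f (b ++ [i])) (ClCo A) (d (b ++ [i])) y ->
                      Slice (f b) (ClCo A) (d b) y) /\
         InCoPlusBall (x b) (fun i => x (b ++ [i])) (k b) (2 * dl (n - 1)%nat))) /\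
    ApproxBush T k x (fun n => 2 * dl n).
Proof.
  assert (HBs : forall n, smallset eps (B n)).
  { intros n. destruct (HBdiam n) as [r [Hr H]]. exists (Rmax r 0). split. apply Rmax_r. split.
    apply Rmax_lub_lt; lra. intros x y Hx Hy. eapply Rle_trans. apply H; auto. apply Rmax_l. }
  assert (Hde : 2 * delta < eps) by lra.
  pose proof HAne as [a0 Ha0].
  pose (cf := fun n Ks nd => proj1_sig (constructive_indefinite_description _
                (cspec_ex A HAne HAball eps HAdent dl Hdl n Ks nd))).
  assert (Hcf : forall n Ks nd, cspec A eps dl n Ks nd (cf n Ks nd)).
  { intros n Ks nd. unfold cf. destruct (constructive_indefinite_description _ _); auto. }
  set (root := (a0, (fun _ : X => 0), 1) : ND X).
  assert (Hroot : inv A dl 0 root).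
  { unfold root, inv; simpl. split; auto. split.
    - split; [|split]. intros; ring. intros; ring. intros x. rewrite Rabs_R0. apply vnorm_nonneg.
    - split. lra. split. apply ClCo_incl; auto. exists 0. split.
      + split. intros r [y [_ Hr]]. lra. intros b Hb. apply Hb. exists a0. split; auto. apply ClCo_incl; auto.
      + pose proof (Hdl 0%nat). lra. }
  set (T := Tg cf B delta root). set (k := kg cf B delta root).
  set (D := Dg cf B delta root).
  assert (HI : forall b, T b -> inv A dl (length b) (D b)).
  { intros b Hb. apply (tree_inv A eps dl cf B delta root); auto. }
  assert (HSP : forall b, T b -> cspec A eps dl (length b) (KsOf B delta (length b) (lev cf B delta root (length b))) (D b)
       (cf (length b) (KsOf B delta (length b) (lev cf B delta root (length b))) (D b))) by (intros; apply Hcf).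
  assert (Spec : forall b, T b ->
     (1 <= k b)%nat /\
     (forall i, (1 <= i <= k b)%nat -> A (fst (fst (D (b ++ [i])))) /\
        goodP A (KsOf B delta (length b) (lev cf B delta root (length b))) (snd (fst (D b))) (snd (D b)) (dl (S (length b)))
          (snd (fst (D (b ++ [i])))) (snd (D (b ++ [i]))) (fst (fst (D (b ++ [i]))))) /\
     InCoPlusBall (fst (fst (D b))) (fun i => fst (fst (D (b ++ [i])))) (k b) (2 * dl (length b))).
  { intros b Hb. destruct (HSP b Hb (HI b Hb) (KsOf_small eps B delta _ _ HBs Hdelta0 Hde)) as [S1 [S2 S3]].
    unfold D. rewrite (functional_extensionality (fun i => fst (fst (Dg cf B delta root (b ++ [i]))))
       (fun i => fst (fst (snd (cf (length b) (KsOf B delta (length b) (lev cf B delta root (length b))) (D b)) i)))).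
    2: { intros i. rewrite Dg_child. auto. }
    split; auto. split; auto. intros i Hi. rewrite !Dg_child. apply S2. auto. }
  exists T, k, (fun b => fst (fst (D b))), (fun b => snd (fst (D b))), (fun b => snd (D b)).
  split; [|split; [|split; [|split]]].
  - split; [|split].
    + apply Tg_nil.
    + intros b i H. apply Tg_child in H. tauto.
    + intros b i Hb. unfold T. rewrite Tg_child. tauto.
  - intros b Hb. apply Spec; auto.
  - intros b Hb. destruct (HI b Hb) as [H1 [H2 [H3 _]]]. auto.
  - intros n. split; [|split].
    + intros b Hb Hl. destruct (HI b Hb) as [H1 [H2 [H3 H4]]]. rewrite Hl in H4. split; auto.
      intros y Hy _. eapply slice_mono; [|exact Hy]. pose proof (Hdl n). nra.
    + intros Hn b Hb Hl. destruct b as [|j b'] using rev_ind. simpl in Hl; lia.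
      clear IHb'. unfold T in Hb. apply Tg_child in Hb. destruct Hb as [Hb0 Hi].
      rewrite length_app in Hl. simpl in Hl.
      destruct (Spec b' Hb0) as [_ [S2 _]]. destruct (S2 j Hi) as [_ [_ [_ [_ [_ Hav]]]]].
      split.
      * intros y Hy HBy. apply (Hav (B (length b')) y). left; auto. auto.
        replace (n - 1)%nat with (length b') in HBy by lia. auto.
      * intros y Hy p Hp Hlp Hd. apply (Hav (ballK delta (fst (fst (D p)))) y); auto.
        right. apply in_map. apply lev_pts; auto. lia.
    + intros Hn b Hb Hl. destruct (Spec b Hb) as [_ [S2 S3]]. split.
      * intros i Hi y Hy. destruct (S2 i Hi) as [_ [_ [_ [_ [Hsub _]]]]]. apply Hsub; auto.
      * rewrite <- Hl. auto.
  - intros n b Hb Hl. destruct (Spec b Hb) as [_ [_ S3]]. subst n. auto.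
Qed.
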